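(* Let $k\in\mathbb N$ be odd. Then the polynomial $2^{2(k-1)}(a^k-b^k)^2-(a-b)^{2k}\in\mathbb R[a,b]$ is a sum of squares of polynomials (of degree at most $k$). *)

(* Defs.v *)
From HB Require Import structures.
From mathcomp Require Import all_boot all_order all_algebra.
From mathcomp Require Import reals.
From mathcomp Require Import mpoly.
Set Implicit Arguments. Unset Strict Implicit. Unset Printing Implicit Defensive.
Import Order.TTheory GRing.Theory Num.Theory.
Local Open Scope ring_scope.

(* p is a sum of squares of polynomials, each of total degree at most d
   (msize q = total degree + 1, and msize 0 = 0). *)
Definition sos_deg_le (R : nzRingType) (n d : nat) (p : {mpoly R[n]}) : Prop :=
  exists s : seq {mpoly R[n]},
    all (fun q => (msize q <= d.+1)%N) s /\ p = \sum_(q <- s) q ^+ 2.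

Definition pk (R : nzRingType) (k : nat) : {mpoly R[2]} :=
  let a := 'X_(0 : 'I_2) in
  let b := 'X_(1 : 'I_2) in
  2 ^+ (2 * (k - 1)) * (a ^+ k - b ^+ k) ^+ 2 - (a - b) ^+ (2 * k).

(* Main.v *)
Require Import Defs.
From HB Require Import structures.
From mathcomp Require Import all_boot all_order all_algebra.
From mathcomp Require Import reals.
From mathcomp Require Import mpoly.
From mathcomp Require Import zify ring.
Import GRing.Theory Num.Theory.
Local Open Scope ring_scope.

Section Aux.
Variable R : realType.
Notation P := {mpoly R[2]}.

Lemma msM (p q : P) i j : (msize p <= i.+1)%N -> (msize q <= j.+1)%N ->
  (msize (p * q) <= (i + j).+1)%N.
Proof.
move=> hp hq.
have [->|p0] := eqVneq p 0; first by rewrite mul0r msize0.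
have [->|q0] := eqVneq q 0; first by rewrite mulr0 msize0.
rewrite msizeM //; move: hp hq; set x := msize p; set y := msize q.
move=> hp hq; rewrite -subn1; lia.
Qed.

Lemma msX (p : P) i n : (msize p <= i.+1)%N -> (msize (p ^+ n) <= (i * n).+1)%N.
Proof.
move=> hp; elim: n => [|n IH]; first by rewrite expr0 msize1 muln0.
by rewrite exprS mulnS; apply: msM.
Qed.

Lemma msC (c : R) : (msize (c%:MP : P) <= 1)%N.
Proof. by rewrite msizeC; case: (c != 0). Qed.

Lemma msD (p q : P) d : (msize p <= d)%N -> (msize q <= d)%N -> (msize (p + q) <= d)%N.
Proof. move=> hp hq; apply: leq_trans (msizeD_le _ _) _; rewrite geq_max hp hq //. Qed.

Lemma msN (p : P) : msize (- p) = msize p.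
Proof. exact: msizeN. Qed.

Lemma msle (p : P) a b : (msize p <= a)%N -> (a <= b)%N -> (msize p <= b)%N.
Proof. exact: leq_trans. Qed.

End Aux.

Theorem mainTheorem17 (R : realType) (k : nat) (hk : odd k) :
  sos_deg_le k (pk R k).
Proof.
rewrite /sos_deg_le /pk.
set a : {mpoly R[2]} := 'X_(0 : 'I_2).
set b : {mpoly R[2]} := 'X_(1 : 'I_2).
have ha : (msize a <= 2)%N by rewrite msizeX mdeg1.
have hb : (msize b <= 2)%N by rewrite msizeX mdeg1.
set u := a + b.
set v := a - b.
have hu : (msize u <= 2)%N by apply: msD.
have hv : (msize v <= 2)%N by apply: msD => //; rewrite msN.
set T := \sum_(i < k) (odd i)%:R * 'C(k, i)%:R * u ^+ (k - i) * v ^+ i.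
set f := fun i : nat =>
  (Num.sqrt (2 * 'C(k, i)%:R * (odd i)%:R : R))%:MP * u ^+ ((k - i)./2) * v ^+ ((k + i)./2).
exists (T :: [seq f i | i <- index_iota 0 k]).
split.
  rewrite /= andbC; apply/andP; split.
    apply/allP => q /mapP [i]; rewrite mem_index_iota => /andP [_ ik] ->.
    rewrite /f; apply: (@leq_trans (0 + 1 * (k-i)./2 + 1 * (k+i)./2).+1).
      apply: msM; first apply: msM; first exact: msC.
        exact: msX.
      exact: msX.
    lia.
  rewrite /T; apply: (big_ind (fun p : {mpoly R[2]} => msize p <= k.+1)%N).
  - by rewrite msize0.
  - by move=> x y; apply: msD.
  move=> i _.
  have -> : (odd i)%:R * 'C(k, i)%:R = ((odd i)%:R * 'C(k, i)%:R : R)%:MP :> {mpoly R[2]}.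
    by rewrite mpolyCM !mpolyC_nat.
  apply: (@leq_trans (0 + 1 * (k - i) + 1 * i).+1).
    apply: msM; first apply: msM; first exact: msC.
      exact: msX.
    exact: msX.
  rewrite ltnS; have := ltn_ord i; lia.
have k0 : (0 < k)%N by lia.
set S := \sum_(i < k.+1) (odd i)%:R * 'C(k, i)%:R * u ^+ (k - i) * v ^+ i.
have ST : S = T + v ^+ k.
  rewrite /S big_ord_recr /= hk subnn binn expr0 mulr1n mul1r mulr1 mul1r //.
have two0 : (2 : {mpoly R[2]}) != 0.
  by rewrite -mpolyC_nat mpolyC_eq0 pnatr_eq0.
have key : 2 ^+ (k - 1) * (a ^+ k - b ^+ k) = S.
  apply: (mulfI two0).
  have -> : 2 * (2 ^+ (k - 1) * (a ^+ k - b ^+ k)) = (u + v) ^+ k - (u - v) ^+ k.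
    have e1 : u + v = 2 * a by rewrite /u /v; ring.
    have e2 : u - v = 2 * b by rewrite /u /v; ring.
    rewrite e1 e2 !exprMn mulrA -exprS subn1 prednK //; ring.
  rewrite exprDn exprBn -sumrB /S mulr_sumr; apply: eq_bigr => i _.
  rewrite -signr_odd; case: (odd i); rewrite /= ?expr1 ?expr0; ring.
rewrite big_cons big_map.
have -> : 2 ^+ (2 * (k - 1)) * (a ^+ k - b ^+ k) ^+ 2 = S ^+ 2.
  by rewrite -key exprMn -exprM mulnC.
have -> : (a - b) ^+ (2 * k) = (v ^+ k) ^+ 2 by rewrite -exprM mulnC.
rewrite ST.
have -> : (T + v ^+ k) ^+ 2 - v ^+ k ^+ 2 = T ^+ 2 + 2 * v ^+ k * T by ring.
congr (_ + _).
rewrite /T mulr_sumr big_mkord; apply: eq_bigr => i _.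
rewrite /f.
case oi: (odd i); last first.
  by rewrite /= !mulr0 sqrtr0 mul0r !mul0r expr0n /= mulr0.
have ik := ltn_ord i.
rewrite !exprMn -!exprM !muln2.
have -> : ((k - i)./2.*2 = k - i)%N by lia.
have -> : ((k + i)./2.*2 = k + i)%N by lia.
rewrite -rmorphXn /= sqr_sqrtr; last first.
  by rewrite !mulr_ge0 // ler0n.
rewrite !mpolyCM !mpolyC_nat /= mulr1 exprD; ring.
Qed.
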